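(* Consider a single base station serving $N$ static users $\mathrm{UE}_1,\ldots,\mathrm{UE}_N$ over slots $t=1,\ldots,T$. At each slot the base station schedules a transmission (of a fresh packet) to exactly one user. At each slot $t$, the channel state $\mathsf{Ch}_i(t)\in\{0,1\}$ (\textsf{Bad}$=0$, \textsf{Good}$=1$) of each user is chosen by an omniscient adversary, which may choose any of the $2^N$ state vectors at each slot; a scheduled transmission is received successfully iff the scheduled user's channel is \textsf{Good} in that slot, in which case that user's age resets to $1$, while every other age (and the scheduled user's age upon failure) increases by $1$. An online policy decides whom to schedule without any knowledge of current or future channel states (only of past outcomes). The cost of a policy on a channel-state sequence $\sigma\in(\{0,1\}^N)^T$ is $\sum_{t=1}^{T}\sum_{i=1}^{N}h_i(t)$, where $h_i(t)$ is the age of $\mathrm{UE}_i$ at slot $t$. The competitive ratio of an online policy $\mathcal{A}$ is $\eta^{\mathcal{A}}=\sup_{\sigma}\frac{\text{cost of }\mathcal{A}\text{ on }\sigma}{\text{cost of }\mathsf{OPT}\text{ on }\sigma}$, the supremum over all finite-length sequences $\sigma$, where $\mathsf{OPT}$ is the optimal offline policy knowing $\sigma$ in advance. Then the competitive ratio $\eta$ of any online scheduling policy with $N$ users satisfies $\eta\ge \frac{N}{2}+\frac{1}{2N}$. Moreover, for $N=2$ users, $\eta\ge 1.5$. *)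

(* Defs.v *)
From HB Require Import structures.
From mathcomp Require Import all_boot all_order all_algebra.
From mathcomp Require Import all_classical all_reals.
From mathcomp Require Import ereal.
Set Implicit Arguments. Unset Strict Implicit. Unset Printing Implicit Defensive.
Import Order.TTheory GRing.Theory Num.Theory.
Local Open Scope classical_set_scope.
Local Open Scope ring_scope.

(* A channel-state sequence: [sigma t i] is Ch_i(t+1) (true = Good, false = Bad).
   Only the first T entries matter for a horizon T. *)
Definition chan (N : nat) := nat -> 'I_N -> bool.

(* An (adaptive, deterministic) decision rule: given the slot index (0-based)
   and the history of past feedback bits (success/failure of each past
   transmission), choose the user to schedule. *)
Definition decision (N : nat) := nat -> seq bool -> 'I_N.

(* State after t slots: (feedback history, ages h_i(t)).  Initial ages h_i(0)=0,
   so that every age at slot 1 equals 1. *)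
Fixpoint run (N : nat) (dec : decision N) (sigma : chan N) (t : nat)
  : seq bool * ('I_N -> nat) :=
  match t with
  | 0 => ([::], fun _ => 0%N)
  | t'.+1 =>
      let st := run dec sigma t' in
      let u := dec t' st.1 in
      let b := sigma t' u in
      (rcons st.1 b, fun j => if (j == u) && b then 1%N else (st.2 j).+1)
  end.

Definition cost (N : nat) (dec : decision N) (sigma : chan N) (T : nat) : nat :=
  (\sum_(1 <= t < T.+1) \sum_(i < N) (run dec sigma t).2 i)%N.

Definition online_policy (N : nat) := seq bool -> 'I_N.

Definition online_dec (N : nat) (pol : online_policy N) : decision N :=
  fun _ hist => pol hist.

(* Offline policy: a fixed schedule chosen knowing sigma in advance. *)
Definition offline_dec (N : nat) (s : nat -> 'I_N) : decision N :=
  fun t _ => s t.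

Definition opt_cost (R : realType) (N : nat) (sigma : chan N) (T : nat) : R :=
  inf [set (cost (offline_dec s) sigma T)%:R | s in [set: nat -> 'I_N]].

Definition competitive_ratio (R : realType) (N : nat) (pol : online_policy N)
  : \bar R :=
  ereal_sup [set r : \bar R | exists (T : nat) (sigma : chan N),
      (0 < T)%N /\
      r = ((cost (online_dec pol) sigma T)%:R / opt_cost R sigma T)%:E].

(* Main.v *)
Require Import Defs.
From mathcomp Require Import all_boot all_order all_algebra.
From mathcomp Require Import all_classical all_reals.
From mathcomp Require Import ereal.
From mathcomp Require Import zify ring lra.
Import Order.TTheory GRing.Theory Num.Theory.
Local Open Scope ring_scope.
Set Implicit Arguments. Unset Strict Implicit.

Definition blk N (pol : online_policy N) (t : nat) : 'I_N := pol (nseq t false).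
Definition adv N (pol : online_policy N) : chan N := fun t i => i != blk pol t.

Definition qstep N (b : 'I_N) (q : seq 'I_N) : 'I_N * seq 'I_N :=
  match q with
  | h :: u :: r => if h == b then (u, h :: rcons r u) else (h, rcons (u :: r) h)
  | [:: h] => (h, [:: h])
  | [::] => (b, [::])
  end.

Fixpoint qs N (pol : online_policy N) (t : nat) : seq 'I_N :=
  match t with
  | 0 => enum 'I_N
  | t'.+1 => (qstep (blk pol t') (qs pol t')).2
  end.

Definition osch N (pol : online_policy N) (t : nat) : 'I_N :=
  (qstep (blk pol t) (qs pol t)).1.

Lemma qstep_perm N (b : 'I_N) q : perm_eq (qstep b q).2 q.
Proof.
case: q => [|h [|u r]] //=.
case: ifP => _ /=.
  rewrite perm_cons.
  by move: (perm_rcons u r (u :: r)); rewrite perm_refl => ->.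
by move: (perm_rcons h (u :: r) (h :: u :: r)); rewrite perm_refl => ->.
Qed.

Lemma qs_perm N (pol : online_policy N) t : perm_eq (qs pol t) (enum 'I_N).
Proof.
elim: t => [|t IH] /=; first exact: perm_refl.
exact: perm_trans (qstep_perm _ _) IH.
Qed.

Lemma qs_uniq N (pol : online_policy N) t : uniq (qs pol t).
Proof. by rewrite (perm_uniq (qs_perm pol t)) enum_uniq. Qed.

Lemma qs_size N (pol : online_policy N) t : size (qs pol t) = N.
Proof. by rewrite (perm_size (qs_perm pol t)) size_enum_ord. Qed.

Lemma qs_mem N (pol : online_policy N) t i : i \in qs pol t.
Proof. by rewrite (perm_mem (qs_perm pol t)) mem_enum. Qed.

Lemma osch_ok N (pol : online_policy N) t : (1 < N)%N -> osch pol t != blk pol t.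
Proof.
move=> N2; rewrite /osch.
have := qs_size pol t; have := qs_uniq pol t.
case: (qs pol t) => [|h [|u r]] /=; try (move=> _ E; rewrite -E in N2; by []).
move=> /andP [hn _] _.
case: ifP => [/eqP <- /=|/negbT //].
by apply: contra hn => /eqP ->; rewrite inE eqxx.
Qed.

Lemma nseqS (T : Type) (x : T) t : nseq t.+1 x = rcons (nseq t x) x.
Proof. by elim: t => //= t IH; rewrite IH. Qed.

Lemma online_run N (pol : online_policy N) t :
  (run (online_dec pol) (adv pol) t).1 = nseq t false /\
  forall i, (run (online_dec pol) (adv pol) t).2 i = t.
Proof.
elim: t => [|t [IH1 IH2]] //=.
have Hb : adv pol t (online_dec pol t (run (online_dec pol) (adv pol) t).1) = false.
  by rewrite /adv /online_dec IH1 /blk eqxx.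
rewrite Hb IH1 -nseqS; split => // i; by rewrite andbF IH2.
Qed.

Lemma run_le_t N (dec : decision N) sigma t i : ((run dec sigma t).2 i <= t)%N.
Proof.
elim: t => [|t IH] //=; case: ifP => // _.
Qed.

Lemma run_ge1 N (dec : decision N) sigma t i : (1 <= (run dec sigma t.+1).2 i)%N.
Proof. by rewrite /=; case: ifP. Qed.

Definition offA N (pol : online_policy N) t i :=
  (run (offline_dec (osch pol)) (adv pol) t).2 i.

Lemma offA_step N (pol : online_policy N) t i : (1 < N)%N ->
  offA pol t.+1 i = if i == osch pol t then 1%N else (offA pol t i).+1.
Proof.
move=> N2; rewrite /offA /= /offline_dec /adv (osch_ok pol t N2) andbT //.
Qed.

Lemma offA_inv N (pol : online_policy N) t i : (1 < N)%N ->
  (0 < index i (qs pol t))%N -> (offA pol t i + index i (qs pol t) <= N)%N.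
Proof.
move=> N2; elim: t i => [|t IH] i.
  move=> _; rewrite /offA /= add0n.
  have H : (index i (enum (ordinal N)) < N)%N.
    by have := index_mem i (enum (ordinal N)); rewrite mem_enum size_enum_ord inE.
  exact: ltnW.
rewrite offA_step //.
have Hsz := qs_size pol t; have Hu := qs_uniq pol t; have Hm := qs_mem pol t i.
move: (IH i) Hsz Hu Hm.
rewrite /= /osch.
case: (qs pol t) => [|h [|u r]] /=; try (move=> _ E; rewrite -E in N2; by []).
move=> IHi Hsz /andP [hn /andP [un _]] Hm.
rewrite inE negb_or in hn.
case/andP: hn => hu hr.
case: ifP => hb /=.
- case: (eqVneq i u) => [->|iu].
    rewrite (negbTE hu) -cats1 index_cat (negbTE un) /= eqxx => _.
    lia.
  rewrite ?(negbTE iu).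
  case: (eqVneq h i) => [_|hi]; first by [].
  have ir : i \in r.
    by move: Hm; rewrite !inE eq_sym (negbTE hi) (negbTE iu).
  rewrite -cats1 index_cat ir.
  move: IHi; rewrite (negbTE hi) eq_sym (negbTE iu) => H _; have := H isT; lia.
- case: (eqVneq i h) => [->|ih].
    rewrite eq_sym (negbTE hu) -cats1 index_cat (negbTE hr) /= eqxx => _.
    lia.
  rewrite ?(negbTE ih).
  case: (eqVneq u i) => [_|ui]; first by [].
  have ir : i \in r.
    by move: Hm; rewrite !inE (negbTE ih) eq_sym (negbTE ui).
  rewrite -cats1 index_cat ir.
  move: IHi; rewrite eq_sym (negbTE ih) (negbTE ui) => H _; have := H isT; lia.
Qed.

Lemma off_sum N (pol : online_policy N) t : (1 < N)%N ->
  (\sum_(i < N) offA pol t i <= N * N + t)%N.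
Proof.
move=> N2.
have Hsz := qs_size pol t.
have Hinv := fun i => @offA_inv _ pol t i N2.
case E: (qs pol t) Hsz Hinv => [|h r] Hsz Hinv; first by exfalso; move: N2; rewrite -Hsz.
rewrite (bigD1 h) //= addnC; apply: leq_add; last exact: run_le_t.
apply: (@leq_trans (\sum_(i < N | i != h) N)).
  apply: leq_sum => i ih; have := Hinv i; rewrite /= eq_sym (negbTE ih) => H.
  have := H isT; lia.
rewrite sum_nat_const; apply: leq_mul => //.
by rewrite -[X in (_ <= X)%N](card_ord N); exact: max_card.
Qed.

Lemma sumt T : ((\sum_(1 <= t < T.+1) t) * 2 = T * T.+1)%N.
Proof.
elim: T => [|T IH]; first by rewrite big_geq.
rewrite big_nat_recr //= mulnDl IH; nia.
Qed.

Lemma online_cost N (pol : online_policy N) T :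
  cost (online_dec pol) (adv pol) T = (N * \sum_(1 <= t < T.+1) t)%N.
Proof.
rewrite /cost big_distrr /=; apply: eq_bigr => t _.
under eq_bigr do rewrite (proj2 (online_run pol t)).
by rewrite sum_nat_const card_ord.
Qed.

Lemma offline_cost N (pol : online_policy N) T : (1 < N)%N ->
  (cost (offline_dec (osch pol)) (adv pol) T <= T * (N * N) + \sum_(1 <= t < T.+1) t)%N.
Proof.
move=> N2; rewrite /cost.
apply: (@leq_trans (\sum_(1 <= t < T.+1) (N * N + t))).
  by apply: leq_sum => t _; exact: off_sum.
by rewrite big_split /= sum_nat_const_nat subn1.
Qed.

Lemma cost_ge1 N (hN : (0 < N)%N) (dec : decision N) sigma T : (0 < T)%N ->
  (1 <= cost dec sigma T)%N.
Proof.
move=> T0; rewrite /cost big_ltn ?ltnS //.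
apply: leq_trans (leq_addr _ _).
rewrite (bigD1 (Ordinal hN)) //=.
apply: leq_trans (leq_addr _ _). by case: ifP.
Qed.

Lemma opt_bounds (R : realType) N (hN : (0 < N)%N) (sigma : chan N) T
  (s : nat -> 'I_N) : (0 < T)%N ->
  0 < opt_cost R sigma T /\ opt_cost R sigma T <= (cost (offline_dec s) sigma T)%:R.
Proof.
move=> T0; rewrite /opt_cost; split.
  apply: (@lt_le_trans _ _ 1) => //.
  apply: lb_le_inf.
    by exists (cost (offline_dec s) sigma T)%:R; exists s.
  move=> y [s' _ <-]; rewrite ler1n; exact: cost_ge1.
apply: ge_inf; last by exists s.
by exists 0 => y [s' _ <-].
Qed.

Lemma cr_lb (R : realType) N (hN : (0 < N)%N) (pol : online_policy N) (T : nat)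
  (sigma : chan N) (s : nat -> 'I_N) (x : R) : (0 < T)%N -> 0 <= x ->
  x * (cost (offline_dec s) sigma T)%:R <= (cost (online_dec pol) sigma T)%:R ->
  (x%:E <= competitive_ratio R pol)%E.
Proof.
move=> T0 x0 H.
have [op0 ople] := opt_bounds R hN sigma s T0.
apply: le_trans (ereal_sup_ubound _); last by exists T, sigma; split.
rewrite lee_fin ler_pdivlMr //.
apply: le_trans H; exact: ler_wpM2l.
Qed.

Lemma cost1 N (dec : decision N) sigma : cost dec sigma 1 = N.
Proof.
rewrite /cost big_nat1 /=.
under eq_bigr do rewrite if_same.
by rewrite sum_nat_const card_ord muln1.
Qed.

Unset Implicit Arguments. Set Strict Implicit.

Lemma key_ineq N T S : (1 < N)%N -> T = (2 * (N * N) * (N * N + 1) + 23)%N ->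
  (S * 2 = T * T.+1)%N ->
  ((N * N + 1) * (T * (N * N) + S) <= 2 * N * (N * S))%N.
Proof.
move=> N2 HT HS.
have -> : (2 * N * (N * S) = 2 * (N * N) * S)%N by rewrite !mulnA.
move: HT HS; set M := (N * N)%N => HT HS.
have M4 : (4 <= M)%N by rewrite /M; exact: (leq_mul N2 N2).
have H1 : (2 * M * (M + 1) <= (M - 1) * (T + 1))%N.
  apply: (@leq_trans (T + 1)); first by rewrite HT -addnA leq_addr.
  apply: leq_pmull; lia.
have H2 : (2 * M * (M + 1) * T <= (M - 1) * (T + 1) * T)%N by apply: leq_mul.
have H3 : ((M + 1) * (T * M) <= (M - 1) * S)%N.
  rewrite -(leq_pmul2l (_ : 0 < 2)%N) //.
  have -> : (2 * ((M + 1) * (T * M)) = 2 * M * (M + 1) * T)%N.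
    by ring.
  have -> : (2 * ((M - 1) * S) = (M - 1) * (T + 1) * T)%N.
    by rewrite -mulnA [((T + 1) * T)%N]mulnC addn1 -HS; ring.
  exact: H2.
have -> : (2 * M * S = (M + 1) * S + (M - 1) * S)%N.
  by rewrite -mulnDl; congr (_ * _)%N; lia.
by rewrite mulnDr addnC leq_add2l.
Qed.

Theorem theorem4 (R : realType) (N : nat) (hN : (0 < N)%N)
    (pol : online_policy N) :
  ((N%:R / 2 + 1 / (2 * N%:R) : R)%:E <= competitive_ratio R pol)%E /\
  (N = 2%N -> ((3 / 2 : R)%:E <= competitive_ratio R pol)%E).
Proof.
case: (ltnP 1 N) => N2.
- set T := (2 * (N * N) * (N * N + 1) + 23)%N.
  have T0 : (0 < T)%N by rewrite /T addnS.
  have HS := sumt T.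
  move: HS; set S := (\sum_(1 <= t < T.+1) t)%N => HS.
  have Hon := online_cost pol T.
  have Hoff := offline_cost pol T N2.
  have gen : forall (x : R) (a b : nat), (a * (T * (N * N) + S) <= b * (N * S))%N ->
      x = a%:R / b%:R -> (0 < b)%N -> (x%:E <= competitive_ratio R pol)%E.
    move=> x a b Hab -> b0.
    apply: (@cr_lb R N hN pol T (adv pol) (osch pol)) => //.
    rewrite Hon mulrAC ler_pdivrMr ?ltr0n // -!natrM ler_nat.
    apply: leq_trans (leq_mul (leqnn a) Hoff) _; by rewrite [X in (_ <= X)%N]mulnC.
  split.
  + apply: (gen _ (N * N + 1)%N (2 * N)%N).
    * have := @key_ineq N T S N2 erefl HS. exact.
    * have N0 : (N%:R : R) != 0 by rewrite pnatr_eq0 -lt0n.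
      rewrite natrD !natrM; field.
      by rewrite N0 /= ?pnatr_eq0.
    * by rewrite muln_gt0.
  + move=> N2'.
    apply: (gen _ 3 2) => //.
    move: HS; rewrite /T N2' /= => HS.
    have -> : S = 2016%N by lia.
    by [].
- have N1 : N = 1%N by lia.
  subst N.
  split => [|//].
  apply: (@cr_lb R 1%N hN pol 1%N (adv pol) (fun _ => Ordinal hN)) => //.
  rewrite !cost1; lra.
Qed.
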